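(* Let $n\ge 2$ be an integer, let $\gamma\ge 2n+2$ be an integer, and fix $\epsilon\in\left(\frac{1}{\gamma^2},\frac{1}{\gamma}\right)$. Set $\alpha_1=1$ and $\alpha_p=2^{\frac{p-1}{n}}$ for $2\le p\le n$, and $\widehat{\alpha}=\max_{1\le p\le n}\alpha_p$. For $p\in\{1,\dots,n\}$ and $q\in\{0,\dots,2n\}$ define $\psi^{p,q}:[0,1]\to\mathbb{R}$ by $\psi^{p,q}(x)=\alpha_p(x+q\epsilon)$, and $\Psi^q:[0,1]^n\to\mathbb{R}$ by $\Psi^q(x_1,\dots,x_n)=\sum_{p=1}^n\psi^{p,q}(x_p)$. For $k\in\mathbb{N}$ and $i\in\{0,\dots,\gamma^k\}$ put $\lambda^{p,q}_{k,i}=\psi^{p,q}\!\left(\frac{i}{\gamma^k}\right)$, put $\epsilon_k=\frac{\widehat{\alpha}}{\gamma^k}$, and let $A^q_{k,i}$ be the closed interval $\left[\frac{i}{\gamma^k}+q\epsilon,\ \frac{i}{\gamma^k}+\frac{\gamma^2-1}{\gamma^{k+2}}+q\epsilon\right]$. Then for every $p\in\{1,\dots,n\}$ and $q\in\{0,\dots,2n\}$ the following hold: (1) there is a constant $C>0$ independent of $k$ and $i$ such that for all $k\in\mathbb{N}$ and $0\le i\le \gamma^k-1$, $\lambda^{p,q}_{k,i}<\lambda^{p,q}_{k,i+1}\le\lambda^{p,q}_{k,i}+C\,2^{-k}$; (2) for all $k\in\mathbb{N}$, $i\in\{0,\dots,\gamma^k-1\}$ and $i'\in\{0,\dots,\gamma^{k+1}\}$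 such that the closed intervals $A^q_{k,i}$ and $A^q_{k+1,i'}$ do not intersect and $A^q_{k+1,i'}$ lies in the gap between $A^q_{k,i}$ and $A^q_{k,i+1}$, one has $\lambda^{p,q}_{k,i}\le\lambda^{p,q}_{k+1,i'}\le\lambda^{p,q}_{k,i}+\epsilon_k-\epsilon_{k+1}$; (3) for every $k\in\mathbb{N}$ and any two distinct tuples $(i_1,\dots,i_n)\ne(j_1,\dots,j_n)\in\{0,\dots,\gamma^k\}^n$, $$\Psi^q\!\left(\tfrac{i_1}{\gamma^k},\dots,\tfrac{i_n}{\gamma^k}\right)\ne\Psi^q\!\left(\tfrac{j_1}{\gamma^k},\dots,\tfrac{j_n}{\gamma^k}\right).$$
   Context: $\mathbb{N}$ denotes the positive integers. The ''gap between $A^q_{k,i}$ and $A^q_{k,i+1}$'' is the open interval between the right endpoint of $A^q_{k,i}$ and the left endpoint of $A^q_{k,i+1}$. *)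

(* Defs.v *)
From Stdlib Require Import Reals Lra Lia List.
Import ListNotations.
Open Scope R_scope.

Definition alpha (n p : nat) : R :=
  if Nat.eqb p 1 then 1 else Rpower 2 (INR (p - 1) / INR n).

Definition alpha_hat (n : nat) : R :=
  fold_right Rmax (alpha n 1) (map (alpha n) (seq 1 n)).

Definition psi (n : nat) (eps : R) (p q : nat) (x : R) : R :=
  alpha n p * (x + INR q * eps).

(* Psi^q(x_1,...,x_n) = sum_{p=1}^n psi^{p,q}(x_p); tuples are nat -> R,
   only the entries 1..n matter *)
Definition Psi (n : nat) (eps : R) (q : nat) (x : nat -> R) : R :=
  fold_right Rplus 0 (map (fun p => psi n eps p q (x p)) (seq 1 n)).

Definition lambda (n g : nat) (eps : R) (p q k i : nat) : R :=
  psi n eps p q (INR i / INR g ^ k).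

Definition eps_k (n g k : nat) : R := alpha_hat n / INR g ^ k.

Definition A_left (g : nat) (eps : R) (q k i : nat) : R :=
  INR i / INR g ^ k + INR q * eps.
Definition A_right (g : nat) (eps : R) (q k i : nat) : R :=
  INR i / INR g ^ k + (INR g ^ 2 - 1) / INR g ^ (k + 2) + INR q * eps.

Definition A (g : nat) (eps : R) (q k i : nat) : R -> Prop :=
  fun x => A_left g eps q k i <= x <= A_right g eps q k i.

(* Main.v *)
Require Import Defs.
From Stdlib Require Import Reals Lra Lia List.
Module Core.
From mathcomp Require Import all_boot all_order all_algebra.
From mathcomp Require Import Rstruct.
Import Order.TTheory GRing.Theory Num.Theory.
Local Open Scope ring_scope.
Local Notation pZtoQ := (map_poly (intr : int -> rat)).
Lemma core (n : nat) (t : R) (c : nat -> int) : (0 < n)%N -> t ^+ n = 2 ->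
  \sum_(i < n) (c i)%:~R * t ^+ i = 0 -> forall i, (i < n)%N -> c i = 0.
Proof.
move=> n0 tn hs i0 hi0; apply/eqP; apply/negPn/negP => ci0.
pose Q : {poly int} := 'X^n - 2%:P.
have irrQ : irreducible_poly Q.
  apply: (eisenstein_crit (p:=2%N)) => //.
  - by rewrite /Q size_XnsubC //; case: (n) n0.
  - by rewrite /Q (eqP (monicXnsubC _ n0)).
  - by rewrite /Q coefB coefXn coefC /= eq_sym (gtn_eqF n0).
  - move=> i; rewrite /Q size_XnsubC // => /= hi.
    rewrite coefB coefXn coefC (ltn_eqF hi); case: (i == 0)%N => //.
have irrQq := proj2 (irreducible_rat_int Q) irrQ.
pose Pq : {poly rat} := \poly_(i < n) ((c i)%:~R).
have Pq0 : Pq != 0.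
  apply/negP => /eqP/polyP/(_ i0); rewrite coef_poly hi0 coef0.
  by move/eqP; rewrite intr_eq0 (negbTE ci0).
have sPq : (size Pq <= n)%N by apply: size_poly.
have sQq : size (pZtoQ Q) = n.+1.
  by rewrite /Q rmorphB /= map_polyXn map_polyC /= size_XnsubC.
have cop : coprimep (pZtoQ Q) Pq.
  have [h|h] := irredp_XsubCP irrQq (dvdp_gcdl (pZtoQ Q) Pq).
    by rewrite -gcdp_eqp1.
  have : pZtoQ Q %| Pq by rewrite -(eqp_dvdl _ h) dvdp_gcdr.
  move/(dvdp_leq Pq0); rewrite sQq => h2.
  by move: (leq_trans h2 sPq); rewrite ltnn.
have := coprimep_root (x := t) (_ : coprimep (map_poly (ratr : rat -> R) (pZtoQ Q)) (map_poly ratr Pq)).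
rewrite coprimep_map => /(_ cop).
have -> : map_poly (ratr : rat -> R) (pZtoQ Q) = 'X^n - 2%:P.
  by rewrite /Q !rmorphB /= !map_polyXn !map_polyC /= ratr_int.
rewrite /root !hornerE tn subrr eqxx => /(_ isT).
have -> : map_poly (ratr : rat -> R) Pq = \poly_(i < n) ((c i)%:~R).
  apply/polyP => j; rewrite coef_map !coef_poly; case: (j < n)%N => //=.
    by rewrite ratr_int.
  by rewrite rmorph0.
by rewrite horner_poly hs eqxx.
Qed.

Lemma fold_sum (F : nat -> R) m n :
  fold_right Rplus 0%R (List.map F (List.seq m n)) = \sum_(i < n) F (m + i)%N.
Proof.
elim: n m => [|n IH] m /=; first by rewrite big_ord0.
by rewrite big_ord_recl IH addn0 RplusE; congr (_ + _); apply: eq_bigr => i _; rewrite addSnnS.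
Qed.

Lemma key_std (n : nat) (t : R) (a b : nat -> nat) : lt 0 n -> pow t n = IZR 2 ->
  fold_right Rplus R0 (List.map (fun p => Rmult (pow t (Nat.sub p 1)) (Rminus (INR (a p)) (INR (b p)))) (List.seq 1 n)) = R0 ->
  forall p, le 1 p /\ le p n -> a p = b p.
Proof.
move=> /ssrnat.ltP n0 tn hs p [/ssrnat.leP p1 /ssrnat.leP pn].
have tn' : t ^+ n = 2 by rewrite -RpowE tn.
pose c i := ((a i.+1)%:Z - (b i.+1)%:Z).
have hs' : \sum_(i < n) (c i)%:~R * t ^+ i = 0.
  apply: (etrans _ hs); rewrite fold_sum; apply: eq_bigr => i _.
  rewrite RmultE RminusE -!RpowE !INRE /c mulrC rmorphB /=.
  by rewrite Nat.sub_0_r /= add1n.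
have := @core n t c n0 tn' hs' p.-1.
have p0 : (0 < p)%N by [].
rewrite (ltn_predK p1) => /(_ pn) /eqP.
rewrite /c subr_eq0 (ltn_predK p1) => /eqP; by case.
Qed.
End Core.

Open Scope R_scope.

Lemma Rdiv_le_0_compat (a b : R) : 0 <= a -> 0 < b -> 0 <= a / b.
Proof. intros Ha Hb. unfold Rdiv. apply Rmult_le_pos; [exact Ha|]. left; apply Rinv_0_lt_compat; exact Hb. Qed.

Lemma fold_max_ge (l : list R) (d x : R) : In x l -> x <= fold_right Rmax d l.
Proof.
  induction l as [|a l IH]; simpl; intros H; [contradiction|].
  destruct H as [H|H].
  - subst; apply Rmax_l.
  - eapply Rle_trans; [apply IH; exact H | apply Rmax_r].
Qed.

Lemma alpha_pos (n p : nat) : 0 < alpha n p.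
Proof.
  unfold alpha; destruct (Nat.eqb p 1); [lra|].
  unfold Rpower; apply exp_pos.
Qed.

Lemma alpha_le_hat (n p : nat) : (1 <= p <= n)%nat -> alpha n p <= alpha_hat n.
Proof.
  intros Hp; unfold alpha_hat; apply fold_max_ge.
  apply in_map; apply in_seq; lia.
Qed.

Definition tt (n : nat) : R := Rpower 2 (/ INR n).

Lemma tt_pos n : 0 < tt n.
Proof. unfold tt, Rpower; apply exp_pos. Qed.

Lemma tt_pow n : (1 <= n)%nat -> tt n ^ n = 2.
Proof.
  intros Hn. unfold tt. rewrite <- Rpower_pow by (unfold Rpower; apply exp_pos).
  rewrite Rpower_mult. rewrite Rinv_l. apply Rpower_1; lra.
  apply not_0_INR; lia.
Qed.

Lemma alpha_tt n p : (1 <= p <= n)%nat -> alpha n p = tt n ^ (p - 1).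
Proof.
  intros Hp. unfold alpha. destruct (Nat.eqb_spec p 1) as [E|E].
  - subst; simpl; reflexivity.
  - unfold tt. rewrite <- Rpower_pow by (unfold Rpower; apply exp_pos).
    rewrite Rpower_mult. f_equal. unfold Rdiv. ring.
Qed.

Lemma fold_diff (l : list nat) (f g h : nat -> R) :
  fold_right Rplus 0 (map f l) - fold_right Rplus 0 (map g l) =
  fold_right Rplus 0 (map (fun p => f p - g p) l).
Proof. induction l as [|a l IH]; simpl; [ring|]. rewrite <- IH; ring. Qed.

Lemma fold_scale (l : list nat) (F H : nat -> R) (c : R) :
  (forall p, In p l -> F p = H p * c) ->
  fold_right Rplus 0 (map F l) = fold_right Rplus 0 (map H l) * c.
Proof.
  induction l as [|a l IH]; simpl; intros E; [ring|].
  rewrite E by (left; reflexivity). rewrite IH by (intros; apply E; right; assumption). ring.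
Qed.

Theorem lemma3p2 (n g : nat) (eps : R)
  (Hn : (2 <= n)%nat) (Hg : (2 * n + 2 <= g)%nat)
  (Heps1 : 1 / INR g ^ 2 < eps) (Heps2 : eps < 1 / INR g) :
  forall p q : nat, (1 <= p <= n)%nat -> (q <= 2 * n)%nat ->
  (* (1) *)
  (exists C : R, 0 < C /\
     forall k i : nat, (1 <= k)%nat -> (i <= g ^ k - 1)%nat ->
       lambda n g eps p q k i < lambda n g eps p q k (i + 1) /\
       lambda n g eps p q k (i + 1) <= lambda n g eps p q k i + C * / 2 ^ k)
  /\
  (* (2) *)
  (forall k i i' : nat, (1 <= k)%nat -> (i <= g ^ k - 1)%nat ->
     (i' <= g ^ (k + 1))%nat ->
     ~ (exists x, A g eps q k i x /\ A g eps q (k + 1) i' x) ->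
     (forall x, A g eps q (k + 1) i' x ->
        A_right g eps q k i < x < A_left g eps q k (i + 1)) ->
     lambda n g eps p q k i <= lambda n g eps p q (k + 1) i' /\
     lambda n g eps p q (k + 1) i' <=
       lambda n g eps p q k i + eps_k n g k - eps_k n g (k + 1))
  /\
  (* (3) *)
  (forall (k : nat) (ii jj : nat -> nat), (1 <= k)%nat ->
     (forall r, (1 <= r <= n)%nat -> (ii r <= g ^ k)%nat /\ (jj r <= g ^ k)%nat) ->
     (exists r, (1 <= r <= n)%nat /\ ii r <> jj r) ->
     Psi n eps q (fun r => INR (ii r) / INR g ^ k) <>
     Psi n eps q (fun r => INR (jj r) / INR g ^ k)).
Proof.
  intros p q Hp Hq.
  assert (Hr : 6 <= INR g) by (replace 6 with (INR 6) by (simpl; ring); apply le_INR; lia).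
  set (r := INR g) in *.
  pose proof (alpha_pos n p) as Ha.
  pose proof (alpha_le_hat n p Hp) as Hah.
  set (al := alpha n p) in *.
  split; [|split].
  -
    exists al; split; [exact Ha|].
    intros k i Hk Hi.
    assert (HG : 0 < r ^ k) by (apply pow_lt; lra).
    assert (H2 : 0 < 2 ^ k) by (apply pow_lt; lra).
    assert (H2G : 2 ^ k <= r ^ k) by (apply pow_incr; lra).
    unfold lambda, psi; fold al; fold r.
    rewrite plus_INR; simpl INR.
    assert (E : al * ((INR i + 1) / r ^ k + INR q * eps) = al * (INR i / r ^ k + INR q * eps) + al / r ^ k)
      by (field; lra).
    rewrite E. split.
    + assert (0 < al / r ^ k) by (apply Rdiv_lt_0_compat; lra). lra.
    + apply Rplus_le_compat_l. unfold Rdiv. apply Rmult_le_compat_l; [lra|].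
      apply Rinv_le_contravar; lra.
  -
    intros k i i' Hk Hi Hi' Hdisj Hgap.
    assert (HG : 0 < r ^ k) by (apply pow_lt; lra).
    set (G := r ^ k) in *.
    assert (E1 : r ^ (k + 1) = G * r) by (unfold G; rewrite pow_add; ring).
    assert (E2 : r ^ (k + 2) = G * r ^ 2) by (unfold G; rewrite pow_add; ring).
    assert (E3 : r ^ (k + 1 + 2) = G * r ^ 3) by (unfold G; rewrite !pow_add; ring).
    assert (Hnn : 0 <= (r ^ 2 - 1) / (G * r ^ 3)).
    { apply Rdiv_le_0_compat; [nra|]. apply Rmult_lt_0_compat; [lra|]. apply pow_lt; lra. }
    assert (HL := Hgap (A_left g eps q (k + 1) i')).
    assert (HR := Hgap (A_right g eps q (k + 1) i')).
    unfold A, A_left, A_right in HL, HR.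
    fold r in HL, HR. rewrite E1, E2, E3 in HL, HR. fold G in HL, HR.
    specialize (HL ltac:(lra)). specialize (HR ltac:(lra)).
    rewrite plus_INR in HL, HR; simpl INR in HL, HR.
    set (x := INR i) in *. set (y := INR i') in *.
    assert (Hx : 0 <= x) by apply pos_INR.
    assert (L1 : x * r < y).
    { assert (D : y / (G * r) - x / G = (y - x * r) / (G * r)) by (field; lra).
      assert (P : 0 < (y - x * r) / (G * r)).
      { assert (0 <= (r ^ 2 - 1) / (G * r ^ 2)).
        { apply Rdiv_le_0_compat; [nra|]. apply Rmult_lt_0_compat; [lra|]. apply pow_lt; lra. }
        lra. }
      assert (0 < y - x * r); [|lra].
      replace (y - x * r) with ((y - x * r) / (G * r) * (G * r)) by (field; lra).
      apply Rmult_lt_0_compat; [lra|]. apply Rmult_lt_0_compat; lra. }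
    assert (L2 : y * r ^ 2 + (r ^ 2 - 1) < (x + 1) * r ^ 3).
    { assert (D : (x + 1) / G - y / (G * r) - (r ^ 2 - 1) / (G * r ^ 3)
                  = ((x + 1) * r ^ 3 - y * r ^ 2 - (r ^ 2 - 1)) / (G * r ^ 3)) by (field; lra).
      assert (P : 0 < ((x + 1) * r ^ 3 - y * r ^ 2 - (r ^ 2 - 1)) / (G * r ^ 3)) by lra.
      assert (HD : 0 < G * r ^ 3) by (apply Rmult_lt_0_compat; [lra|]; apply pow_lt; lra).
      assert (0 < (x + 1) * r ^ 3 - y * r ^ 2 - (r ^ 2 - 1)); [|lra].
      replace ((x + 1) * r ^ 3 - y * r ^ 2 - (r ^ 2 - 1)) with
        (((x + 1) * r ^ 3 - y * r ^ 2 - (r ^ 2 - 1)) / (G * r ^ 3) * (G * r ^ 3)) by (field; lra).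
      apply Rmult_lt_0_compat; lra. }
    assert (L3 : y - x * r <= r - 1).
    { destruct (Nat.lt_ge_cases i' ((i + 1) * g)) as [Hc|Hc].
      - assert (Hc' : (i' <= i * g + g - 1)%nat) by lia.
        apply le_INR in Hc'. rewrite minus_INR in Hc' by nia.
        rewrite plus_INR, mult_INR in Hc'. simpl INR in Hc'. fold x y r in Hc'. lra.
      - exfalso. apply le_INR in Hc. rewrite mult_INR, plus_INR in Hc. simpl INR in Hc.
        fold x y r in Hc.
        assert (r ^ 2 * ((x + 1) * r) <= r ^ 2 * y) by (apply Rmult_le_compat_l; nra).
        nra. }
    unfold lambda, psi, eps_k; fold al; fold r.
    rewrite E1. fold G. fold x y.
    split.
    + apply Rmult_le_compat_l; [lra|].
      assert (x / G <= y / (G * r)); [|lra].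
      assert (D : y / (G * r) - x / G = (y - x * r) / (G * r)) by (field; lra).
      assert (0 <= (y - x * r) / (G * r)); [|lra].
      apply Rdiv_le_0_compat; [lra|]. apply Rmult_lt_0_compat; lra.
    + set (ah := alpha_hat n) in *.
      assert (D : al * (x / G + INR q * eps) + ah / G - ah / (G * r) - al * (y / (G * r) + INR q * eps)
                  = (ah * (r - 1) - al * (y - x * r)) / (G * r)) by (field; lra).
      assert (0 <= (ah * (r - 1) - al * (y - x * r)) / (G * r)); [|lra].
      apply Rdiv_le_0_compat; [|apply Rmult_lt_0_compat; lra].
      assert (al * (y - x * r) <= al * (r - 1)) by (apply Rmult_le_compat_l; lra).
      assert (al * (r - 1) <= ah * (r - 1)) by (apply Rmult_le_compat_r; lra).
      lra.
  -
    intros k ii jj Hk Hb [s [Hs Hne]] Heq.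
    apply Hne.
    assert (HG : 0 < r ^ k) by (apply pow_lt; lra).
    apply (Core.key_std n (tt n) ii jj); [lia | apply tt_pow; lia | | exact Hs].
    assert (Hd := fold_diff (seq 1 n) (fun p0 => psi n eps p0 q (INR (ii p0) / r ^ k))
                      (fun p0 => psi n eps p0 q (INR (jj p0) / r ^ k)) (fun _ => 0)).
    unfold Psi in Heq. fold r in Heq. rewrite Heq in Hd. rewrite Rminus_diag in Hd.
    rewrite (fold_scale (seq 1 n) _ (fun p0 => tt n ^ (p0 - 1) * (INR (ii p0) - INR (jj p0))) (/ r ^ k)) in Hd.
    + symmetry in Hd. apply Rmult_integral in Hd. destruct Hd as [Hd|Hd]; [exact Hd|].
      exfalso. apply (Rinv_neq_0_compat (r ^ k)); [lra|exact Hd].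
    + intros p0 Hp0. apply in_seq in Hp0. unfold psi. rewrite alpha_tt by lia.
      field. lra.
Qed.
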